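(* Let $v\in\mathbb{Z}^d$ be primitive and $p$ an odd prime. Then $O_{v,p}=\bigsqcup_{h\in M}O_{v,p,h}$ (disjoint union of subsets of $\mathcal{Y}_p$), where $O_{v,p,h}=(\Delta K\times L_v(\mathbb{Z}_p))\cdot((k_v,h),(a_vk_vg_v,g_v^{-1}hg_v))\,\mathbb{G}(\mathbb{Z}[1/p])$.
   Context: Setup: $\mathbb{G}_1=\mathrm{SO}_d$, $\mathbb{G}_2=\mathrm{ASL}_{d-1}=\{\begin{pmatrix}g&*\\0&1\end{pmatrix}:g\in\mathrm{SL}_{d-1}\}$, $\mathbb{G}=\mathbb{G}_1\times\mathbb{G}_2$. Elements of $\mathbb{G}(\mathbb{R}\times\mathbb{Q}_p)$ are written $((g_{1,\infty},g_{1,p}),(g_{2,\infty},g_{2,p}))$ with $g_{i,\infty}\in\mathbb{G}_i(\mathbb{R})$, $g_{i,p}\in\mathbb{G}_i(\mathbb{Q}_p)$; $\mathbb{G}(\mathbb{Z}[1/p])$ is embedded diagonally, $(\gamma_1,\gamma_2)\mapsto((\gamma_1,\gamma_1),(\gamma_2,\gamma_2))$, and $\mathcal{Y}_p=\mathbb{G}(\mathbb{R}\times\mathbb{Q}_p)/\mathbb{G}(\mathbb{Z}[1/p])$. For primitive $v$: $\Lambda_v=v^\perp\cap\mathbb{Z}^d$; $H_v\le\mathrm{SO}_d$ the stabilizer of $v$; $g_v\in\mathrm{SL}_d(\mathbb{Z})$ a fixed matrix whose first $d-1$ columns form a positively oriented $\mathbb{Z}$-basis of $\Lambda_v$ (so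 $g_v^{-1}H_vg_v\le\mathrm{ASL}_{d-1}$); $L_v=\{(h,g_v^{-1}hg_v):h\in H_v\}\le\mathbb{G}$; $k_v\in\mathrm{SO}_d(\mathbb{R})$ fixed with $k_vv=\|v\|e_d$; $a_v=\mathrm{diag}(\|v\|^{-1/(d-1)},\dots,\|v\|^{-1/(d-1)},\|v\|)$, so that $a_vk_vg_v\in\mathrm{ASL}_{d-1}(\mathbb{R})$. With $e$ the identity, $O_{v,p}=((k_v,e),(a_vk_vg_v,e))\cdot L_v(\mathbb{R}\times\mathbb{Q}_p)\,\mathbb{G}(\mathbb{Z}[1/p])\subseteq\mathcal{Y}_p$. $M$ is a (finite) set of representatives of the double cosets in $H_v(\mathbb{Q}_p)=\bigsqcup_{h\in M}H_v(\mathbb{Z}_p)\,h\,H_v(\mathbb{Z}[1/p])$. $K=H_{e_d}(\mathbb{R})\cong\mathrm{SO}_{d-1}(\mathbb{R})$ and $\Delta K\times L_v(\mathbb{Z}_p)=\{((k,h'),(k,g_v^{-1}h'g_v)):k\in K,h'\in H_v(\mathbb{Z}_p)\}$, acting on $\mathcal{Y}_p$ from the left. *)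

(* Defs.v *)
From HB Require Import structures.
From mathcomp Require Import all_boot all_order all_algebra.
From mathcomp Require Import reals exp.
Set Implicit Arguments. Unset Strict Implicit. Unset Printing Implicit Defensive.
Import Order.TTheory GRing.Theory Num.Theory.
Local Open Scope ring_scope.

Definition padic_val (p : nat) (q : rat) : int :=
  (logn p `|numq q|%N)%:Z - (logn p `|denq q|%N)%:Z.

Definition padic_abs_rat (R : realType) (p : nat) (q : rat) : R :=
  if q == 0 then 0 else (p%:R : R) ^ (- padic_val p q).

(* (F, abs, iota) is a completion of Q w.r.t. |.|_p, i.e. F = Q_p. *)
Definition is_Qp (R : realType) (p : nat) (F : fieldType) (abs : F -> R)
    (iota : {rmorphism rat -> F}) : Prop :=
  [/\ (forall x, abs x = 0 <-> x = 0),
      (forall x, 0 <= abs x),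
      (forall x y, abs (x * y) = abs x * abs y),
      (forall x y, abs (x + y) <= Num.max (abs x) (abs y)) &
      (forall q, abs (iota q) = padic_abs_rat R p q)] /\
  (
(forall x (e : R), 0 < e -> exists q, abs (x - iota q) < e) /\
      (forall u : nat -> F,
         (forall e : R, 0 < e -> exists N, forall m k, (N <= m)%N -> (N <= k)%N ->
             abs (u m - u k) < e) ->
         exists l, forall e : R, 0 < e -> exists N, forall m, (N <= m)%N ->
             abs (u m - l) < e)).

Definition inZp (R : realType) (F : fieldType) (abs : F -> R) (x : F) : Prop :=
  abs x <= 1.

Definition inZ1p (p : nat) (q : rat) : Prop := exists k : nat, denq q = (p ^ k)%:Z.

(* ---------- matrix groups (d = n.+2) ---------- *)
Definition SOmx (T : comNzRingType) (m : nat) (A : 'M[T]_m) : Prop :=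
  A^T *m A = 1%:M /\ \det A = 1.

(* ASL_{d-1} = { [g *; 0 1] : g in SL_{d-1} } *)
Definition ASLmx (T : comNzRingType) (n : nat) (A : 'M[T]_(n.+2)) : Prop :=
  \det A = 1 /\ row ord_max A = delta_mx 0 ord_max.

Definition e_last (T : comNzRingType) (n : nat) : 'cV[T]_(n.+2) := delta_mx ord_max 0.

Definition primitive (n : nat) (v : 'cV[int]_(n.+2)) : Prop :=
  forall c : int, (forall i, (c %| v i ord0)%Z) -> `|c| = 1.

Definition intmx (T : comNzRingType) (m m' : nat) (A : 'M[int]_(m, m')) : 'M[T]_(m, m') :=
  map_mx (fun z : int => z%:~R) A.

Definition inHv (T : comNzRingType) (n : nat) (v : 'cV[int]_(n.+2)) (A : 'M[T]_(n.+2)) : Prop :=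
  SOmx A /\ A *m intmx T v = intmx T v.

Definition normv (R : realType) (n : nat) (v : 'cV[int]_(n.+2)) : R :=
  Num.sqrt (\sum_i ((v i 0)%:~R : R) ^+ 2).

Definition a_v (R : realType) (n : nat) (v : 'cV[int]_(n.+2)) : 'M[R]_(n.+2) :=
  diag_mx (\row_(i < n.+2) (if i == ord_max then normv R v
                            else powR (normv R v) (- (n.+1%:R)^-1))).

(* g_v in SL_d(Z) whose first d-1 columns form a positively oriented Z-basis of
   Lambda_v = v^perp \cap Z^d *)
Definition good_gv (n : nat) (v : 'cV[int]_(n.+2)) (gv : 'M[int]_(n.+2)) : Prop :=
  [/\ \det gv = 1,
      (forall i : 'I_(n.+2), i != ord_max -> (gv^T *m v) i 0 = 0),
      (forall w : 'cV[int]_(n.+2), w^T *m v = 0 ->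
          exists c : 'cV[int]_(n.+2), c ord_max 0 = 0 /\ w = gv *m c) &
      0 < \det (\matrix_(i, j) (if j == ord_max then v i 0 else gv i j))].

Definition good_kv (R : realType) (n : nat) (v : 'cV[int]_(n.+2)) (kv : 'M[R]_(n.+2)) : Prop :=
  SOmx kv /\ kv *m intmx R v = normv R v *: e_last R n.

(* ---------- G(R x Q_p) = (SO_d x ASL_{d-1})(R x Q_p) ---------- *)
Record Gel (R : realType) (F : fieldType) (n : nat) := MkG {
  g1r : 'M[R]_(n.+2); g1p : 'M[F]_(n.+2); g2r : 'M[R]_(n.+2); g2p : 'M[F]_(n.+2) }.

Definition gmul (R : realType) (F : fieldType) (n : nat) (x y : Gel R F n) : Gel R F n :=
  MkG (g1r x *m g1r y) (g1p x *m g1p y) (g2r x *m g2r y) (g2p x *m g2p y).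

Definition inG (R : realType) (F : fieldType) (n : nat) (x : Gel R F n) : Prop :=
  [/\ SOmx (g1r x), SOmx (g1p x), ASLmx (g2r x) & ASLmx (g2p x)].

Definition inGZ1p (p n : nat) (c1 c2 : 'M[rat]_(n.+2)) : Prop :=
  [/\ forall i j, inZ1p p (c1 i j), forall i j, inZ1p p (c2 i j), SOmx c1 & ASLmx c2].

Definition gam (R : realType) (F : fieldType) (iota : {rmorphism rat -> F}) (n : nat)
    (c1 c2 : 'M[rat]_(n.+2)) : Gel R F n :=
  MkG (map_mx (fun q => ratr q) c1) (map_mx iota c1) (map_mx (fun q => ratr q) c2) (map_mx iota c2).

Definition conjg_v (T : comUnitRingType) (n : nat) (gv : 'M[int]_(n.+2)) (h : 'M[T]_(n.+2)) :=
  invmx (intmx T gv) *m h *m intmx T gv.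

Definition inLv (R : realType) (F : fieldType) (n : nat) (v : 'cV[int]_(n.+2))
    (gv : 'M[int]_(n.+2)) (x : Gel R F n) : Prop :=
  exists hr hp, [/\ inHv v hr, inHv v hp & x = MkG hr hp (conjg_v gv hr) (conjg_v gv hp)].

(* preimage in G(R x Q_p) of O_{v,p} *)
Definition inO (R : realType) (F : fieldType) (p : nat) (iota : {rmorphism rat -> F}) (n : nat)
    (v : 'cV[int]_(n.+2)) (gv : 'M[int]_(n.+2)) (kv : 'M[R]_(n.+2)) (x : Gel R F n) : Prop :=
  exists l c1 c2, [/\ inLv v gv l, inGZ1p p c1 c2 &
    x = gmul (gmul (MkG kv 1%:M (a_v R v *m kv *m intmx R gv) 1%:M) l) (gam R iota c1 c2)].

Definition inK (R : realType) (n : nat) (k : 'M[R]_(n.+2)) : Prop :=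
  SOmx k /\ k *m e_last R n = e_last R n.

Definition inHvZp (R : realType) (F : fieldType) (abs : F -> R) (n : nat)
    (v : 'cV[int]_(n.+2)) (h : 'M[F]_(n.+2)) : Prop :=
  inHv v h /\ forall i j, inZp abs (h i j).

Definition inHvZ1p (p n : nat) (v : 'cV[int]_(n.+2)) (c : 'M[rat]_(n.+2)) : Prop :=
  inHv v c /\ forall i j, inZ1p p (c i j).

(* preimage in G(R x Q_p) of O_{v,p,h} *)
Definition inOh (R : realType) (F : fieldType) (p : nat) (abs : F -> R)
    (iota : {rmorphism rat -> F}) (n : nat)
    (v : 'cV[int]_(n.+2)) (gv : 'M[int]_(n.+2)) (kv : 'M[R]_(n.+2))
    (h : 'M[F]_(n.+2)) (x : Gel R F n) : Prop :=
  exists k h' c1 c2, [/\ inK k, inHvZp abs v h', inGZ1p p c1 c2 &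
    x = gmul (gmul (MkG k h' k (conjg_v gv h'))
                   (MkG kv h (a_v R v *m kv *m intmx R gv) (conjg_v gv h)))
             (gam R iota c1 c2)].

Definition inDC (R : realType) (F : fieldType) (p : nat) (abs : F -> R)
    (iota : {rmorphism rat -> F}) (n : nat) (v : 'cV[int]_(n.+2))
    (h g : 'M[F]_(n.+2)) : Prop :=
  exists a c, [/\ inHvZp abs v a, inHvZ1p p v c & g = a *m h *m map_mx iota c].

Definition double_coset_reps (R : realType) (F : fieldType) (p : nat) (abs : F -> R)
    (iota : {rmorphism rat -> F}) (n : nat) (v : 'cV[int]_(n.+2))
    (M : seq 'M[F]_(n.+2)) : Prop :=
  [/\ (forall h, h \in M -> inHv v h),
      (forall g, inHv v g -> exists2 h, h \in M & inDC p abs iota v h g) &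
      (forall h h', h \in M -> h' \in M -> h <> h' ->
          forall g, inDC p abs iota v h g -> inDC p abs iota v h' g -> False)].

(* Main.v *)
Require Import Defs.
From HB Require Import structures.
From mathcomp Require Import all_boot all_order all_algebra.
From mathcomp Require Import reals exp.
Import Order.TTheory GRing.Theory Num.Theory.
Local Open Scope ring_scope.
Set Implicit Arguments. Unset Strict Implicit.

Lemma SO_mulT (T : comUnitRingType) m (A : 'M[T]_m) : SOmx A -> A *m A^T = 1%:M.
Proof. by case=> h _; apply: mulmx1C. Qed.

Lemma SO_mul (T : comUnitRingType) m (A B : 'M[T]_m) : SOmx A -> SOmx B -> SOmx (A *m B).
Proof.
case=> hA dA [hB dB]; split; last by rewrite det_mulmx dA dB mulr1.
by rewrite trmx_mul mulmxA -(mulmxA B^T) hA mulmx1 hB.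
Qed.

Lemma SO_tr (T : comUnitRingType) m (A : 'M[T]_m) : SOmx A -> SOmx A^T.
Proof. move=> hA; split; [by rewrite trmxK SO_mulT | by rewrite det_tr; case: hA]. Qed.

Lemma SO1 (T : comUnitRingType) m : SOmx (1%:M : 'M[T]_m).
Proof. by split; rewrite ?trmx1 ?mulmx1 ?det1. Qed.

Lemma SO_map (T T' : comUnitRingType) (f : {rmorphism T -> T'}) m (A : 'M[T]_m) :
  SOmx A -> SOmx (map_mx f A).
Proof. case=> h d; split; first by rewrite map_trmx -map_mxM h map_mx1.
by rewrite det_map_mx d rmorph1. Qed.

Lemma map_intmx (T T' : comNzRingType) (f : {rmorphism T -> T'}) m m' (A : 'M[int]_(m,m')) :
  map_mx f (intmx T A) = intmx T' A.
Proof. by apply/matrixP => i j; rewrite !mxE rmorph_int. Qed.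

Lemma intmxM (T : comNzRingType) m1 m2 m3 (A : 'M[int]_(m1,m2)) (B : 'M[int]_(m2,m3)) :
  intmx T (A *m B) = intmx T A *m intmx T B.
Proof. rewrite /intmx; exact: (map_mxM (intr : {rmorphism int -> T})). Qed.

Lemma intmx_tr (T : comNzRingType) m1 m2 (A : 'M[int]_(m1,m2)) :
  intmx T A^T = (intmx T A)^T.
Proof. by rewrite /intmx map_trmx. Qed.

Lemma det_intmx (T : comNzRingType) m (A : 'M[int]_m) : \det (intmx T A) = (\det A)%:~R.
Proof. rewrite /intmx; exact: (det_map_mx (intr : {rmorphism int -> T})). Qed.

Lemma inHv_mul (T : comUnitRingType) n (v : 'cV[int]_(n.+2)) A B :
  inHv v A -> inHv v B -> inHv (T:=T) v (A *m B).
Proof. case=> sA fA [sB fB]; split; first exact: SO_mul. by rewrite -mulmxA fB fA. Qed.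

Lemma inHv_tr (T : comUnitRingType) n (v : 'cV[int]_(n.+2)) (A : 'M[T]_(n.+2)) :
  inHv v A -> inHv v A^T.
Proof. case=> sA fA; split; first exact: SO_tr.
by rewrite -{1}fA mulmxA; case: sA => -> _; rewrite mul1mx. Qed.

Lemma inHv1 (T : comUnitRingType) n (v : 'cV[int]_(n.+2)) : inHv v (1%:M : 'M[T]_(n.+2)).
Proof. by split; [apply: SO1 | rewrite mul1mx]. Qed.

Lemma inHv_map (T T' : comUnitRingType) (f : {rmorphism T -> T'}) n (v : 'cV[int]_(n.+2)) A :
  inHv v A -> inHv v (map_mx f A).
Proof. case=> sA fA; split; first exact: SO_map.
by rewrite -(map_intmx f) -map_mxM fA. Qed.

Lemma intmx_unit (T : comUnitRingType) n (g : 'M[int]_n) : \det g = 1 -> intmx T g \in unitmx.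
Proof. by move=> d; rewrite unitmxE det_intmx d unitr1. Qed.

Lemma conjM (T : comUnitRingType) n (g : 'M[int]_(n.+2)) (A B : 'M[T]_(n.+2)) : \det g = 1 ->
  conjg_v g (A *m B) = conjg_v g A *m conjg_v g B.
Proof. move=> d; rewrite /conjg_v !mulmxA -(mulmxA _ _ (invmx _)) mulmxV ?intmx_unit //.
by rewrite mulmx1. Qed.

Lemma conj_map (T : fieldType) (T' : comUnitRingType) (f : {rmorphism T -> T'}) n (g : 'M[int]_(n.+2))
  (A : 'M[T]_(n.+2)) : map_mx f (conjg_v g A) = conjg_v g (map_mx f A).
Proof. by rewrite /conjg_v !map_mxM map_invmx !map_intmx. Qed.

Lemma nE (m : nat) : (m%:Z)%:~R = m%:R :> rat.
Proof. by []. Qed.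

Definition Z1pq (p : nat) (q : rat) := exists k (z : int), q * (p%:R) ^+ k = z%:~R.

Lemma Z1pq_int p (z : int) : Z1pq p z%:~R.
Proof. by exists 0%N, z; rewrite expr0 mulr1. Qed.

Lemma Z1pq_add p a b : Z1pq p a -> Z1pq p b -> Z1pq p (a + b).
Proof.
case=> k1 [z1 e1] [k2 [z2 e2]]; exists (k1 + k2)%N, (z1 * (p^k2)%:Z + z2 * (p^k1)%:Z).
rewrite intrD !intrM -e1 -e2 exprD !nE !natrX.
rewrite mulrDl !mulrA; congr (_ + _); last rewrite -mulrA [_ ^+ k1 * _]mulrC mulrA //.
Qed.

Lemma Z1pq_mul p a b : Z1pq p a -> Z1pq p b -> Z1pq p (a * b).
Proof.
case=> k1 [z1 e1] [k2 [z2 e2]]; exists (k1 + k2)%N, (z1 * z2).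
by rewrite intrM -e1 -e2 exprD mulrACA.
Qed.

Lemma Z1pP p q : prime p -> inZ1p p q <-> Z1pq p q.
Proof.
move=> pp; split.
  case=> k hk; exists k, (numq q); rewrite numqE hk nE.
  by rewrite natrX.
case=> k [z e].
have h1 : numq q * (p ^ k)%N%:Z = z * denq q.
  apply: (intr_inj (R:=rat)); rewrite !intrM numqE nE -e natrX.
  by rewrite mulrAC.
have := congr1 absz h1; rewrite !abszM /= => h2.
have h3 : (`|denq q| %| p ^ k)%N.
  rewrite -(@Gauss_dvdr _ `|numq q|); last by rewrite coprime_sym coprime_num_den.
  by rewrite h2 dvdn_mull.
case/(dvdn_pfactor _ _ pp): h3 => j _ hj; exists j.
by rewrite -absz_denq hj.
Qed.

Definition Z1pmx p m m' (A : 'M[rat]_(m,m')) := forall i j, Z1pq p (A i j).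

Lemma Z1pmx_mul p m1 m2 m3 (A : 'M[rat]_(m1,m2)) (B : 'M[rat]_(m2,m3)) :
  Z1pmx p A -> Z1pmx p B -> Z1pmx p (A *m B).
Proof.
move=> hA hB i j; rewrite mxE; apply: (big_ind (Z1pq p)).
- exact: (Z1pq_int p 0).
- exact: Z1pq_add.
- by move=> k _; apply: Z1pq_mul.
Qed.

Lemma Z1pmx_tr p m m' (A : 'M[rat]_(m,m')) : Z1pmx p A -> Z1pmx p A^T.
Proof. by move=> hA i j; rewrite mxE. Qed.

Lemma Z1pmx_int p m m' (A : 'M[int]_(m,m')) : Z1pmx p (intmx rat A).
Proof. by move=> i j; rewrite mxE; apply: Z1pq_int. Qed.

Lemma Z1pmx1 p m : Z1pmx p (1%:M : 'M[rat]_m).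
Proof. by move=> i j; rewrite mxE; case: (i == j); [apply: (Z1pq_int p 1) | apply: (Z1pq_int p 0)]. Qed.

Section Zp.
Variables (R : realType) (F : fieldType) (abs : F -> R).
Hypotheses (a0 : forall x, abs x = 0 <-> x = 0) (ge0 : forall x, 0 <= abs x)
  (aM : forall x y, abs (x * y) = abs x * abs y)
  (aD : forall x y, abs (x + y) <= Num.max (abs x) (abs y)).

Lemma Zp_add x y : Defs.inZp abs x -> Defs.inZp abs y -> Defs.inZp abs (x + y).
Proof. move=> hx hy; apply: le_trans (aD x y) _; by rewrite ge_max hx hy. Qed.

Lemma Zp_mul x y : Defs.inZp abs x -> Defs.inZp abs y -> Defs.inZp abs (x * y).
Proof. by move=> hx hy; rewrite /Defs.inZp aM mulr_ile1. Qed.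

Lemma Zp0 : Defs.inZp abs 0.
Proof. by rewrite /Defs.inZp (proj2 (a0 0) erefl). Qed.

Lemma abs1 : abs 1 = 1.
Proof.
have h : abs 1 != 0 by apply/eqP => /a0 /eqP; rewrite oner_eq0.
by apply: (mulfI h); rewrite -aM mulr1 mulr1.
Qed.

Lemma Zp1 : Defs.inZp abs 1.
Proof. by rewrite /Defs.inZp abs1. Qed.

Definition Zpmx m m' (A : 'M[F]_(m,m')) := forall i j, Defs.inZp abs (A i j).

Lemma Zpmx_mul m1 m2 m3 (A : 'M[F]_(m1,m2)) (B : 'M[F]_(m2,m3)) :
  Zpmx A -> Zpmx B -> Zpmx (A *m B).
Proof.
move=> hA hB i j; rewrite mxE; apply: (big_ind (Defs.inZp abs)).
- exact: Zp0.
- exact: Zp_add.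
- by move=> k _; apply: Zp_mul.
Qed.

Lemma Zpmx_tr m m' (A : 'M[F]_(m,m')) : Zpmx A -> Zpmx A^T.
Proof. by move=> hA i j; rewrite mxE. Qed.

Lemma Zpmx1 m : Zpmx (1%:M : 'M[F]_m).
Proof. by move=> i j; rewrite mxE; case: (i == j); [apply: Zp1 | apply: Zp0]. Qed.
End Zp.

Lemma K_comm (R : realType) n (k : 'M[R]_(n.+2)) (v : 'cV[int]_(n.+2)) :
  inK k -> k *m a_v R v = a_v R v *m k.
Proof.
case=> sk ke.
have ke' : k^T *m e_last R n = e_last R n.
  by rewrite -{1}ke mulmxA; case: sk => -> _; rewrite mul1mx.
have c1 : forall i, k i ord_max = (i == ord_max)%:R.
  move=> i; move: ke; rewrite /e_last -colE => /(congr1 (fun M : 'cV[R]_(n.+2) => M i 0)).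
  by rewrite !mxE eqxx andbT.
have c2 : forall i, k ord_max i = (i == ord_max)%:R.
  move=> i; move: ke'; rewrite /e_last -colE => /(congr1 (fun M : 'cV[R]_(n.+2) => M i 0)).
  by rewrite !mxE eqxx andbT.
apply/matrixP => i j; rewrite /a_v mul_mx_diag mul_diag_mx !mxE.
have [->|hi] := eqVneq i ord_max; have [->|hj] := eqVneq j ord_max => //.
- exact: mulrC.
- by rewrite c2 (negPf hj) mul0r mulr0.
- by rewrite c1 (negPf hi) mul0r mulr0.
- exact: mulrC.
Qed.


Lemma trmxZ' (T : comNzRingType) m m' (a : T) (A : 'M[T]_(m,m')) : (a *: A)^T = a *: A^T.
Proof. by apply/matrixP => i j; rewrite !mxE. Qed.

Lemma v_neq0 (T : numDomainType) n (v : 'cV[int]_(n.+2)) : primitive v -> intmx T v != 0.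
Proof.
move=> hv; apply/eqP => h.
have h0 : forall i, v i 0 = 0.
  move=> i; have := congr1 (fun M : 'cV[T]_(n.+2) => M i 0) h; rewrite !mxE.
  by move/eqP; rewrite intr_eq0 => /eqP.
have := hv 0 (fun i => _); rewrite /= normr0 => H.
have : (0 : int) = 1 by apply: H => i; rewrite dvd0z h0.
by [].
Qed.

Lemma normv_neq0 (R : realType) n (v : 'cV[int]_(n.+2)) (kv : 'M[R]_(n.+2)) : primitive v -> good_kv v kv ->
  normv R v != 0.
Proof.
move=> hv [[sk _] hk]; apply/eqP => h.
move: hk; rewrite h scale0r => h2.
have : intmx R v = 0 by rewrite -[intmx R v]mul1mx -sk -mulmxA h2 mulmx0.
by apply/eqP; apply: v_neq0.
Qed.

Lemma conj_row n (v : 'cV[int]_(n.+2)) gv (c : 'M[rat]_(n.+2)) :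
  primitive v -> good_gv v gv -> inHv v c ->
  row ord_max (conjg_v gv c) = delta_mx 0 ord_max.
Proof.
move=> hv [dg hg0 _ _] hc.
set G := intmx rat gv; set w := intmx rat v.
set t := ((gv^T *m v) ord_max 0)%:~R : rat.
have hGw : G^T *m w = t *: e_last rat n.
  rewrite /G /w -intmx_tr -intmxM; apply/matrixP => i j.
  rewrite !mxE (ord1 j) eqxx andbT.
  have [->|hi] := eqVneq i ord_max; first by rewrite mulr1 /t mxE.
  by rewrite mulr0; have := hg0 i hi; rewrite mxE => ->.
have t0 : t != 0.
  apply/eqP => t0; move: hGw; rewrite t0 scale0r => h.
  have : w = 0 by rewrite -[w](mulKmx (x:=G^T)) ?unitmx_tr ?intmx_unit // h mulmx0.
  by apply/eqP; apply: v_neq0.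
have hE : delta_mx 0 ord_max = t^-1 *: (w^T *m G).
  have := congr1 trmx hGw; rewrite trmx_mul trmxK trmxZ' => ->.
  by rewrite scalerA mulVf // scale1r /e_last trmx_delta.
have hwc : w^T *m c = w^T.
  by case: (inHv_tr hc) => _ h; rewrite -[X in _ = X](congr1 trmx h) trmx_mul trmxK.
rewrite rowE {1}hE -scalemxAl /conjg_v -/G !mulmxA -(mulmxA _ G) mulmxV ?intmx_unit //.
by rewrite mulmx1 hwc -hE.
Qed.

Lemma ASL_conj n (v : 'cV[int]_(n.+2)) gv (c c2 : 'M[rat]_(n.+2)) :
  primitive v -> good_gv v gv -> inHv v c -> ASLmx c2 -> ASLmx (conjg_v gv c *m c2).
Proof.
move=> hv hgv hc [d2 r2]; split.
  case: hgv => dg _ _ _; case: hc => [[_ dc] _].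
  by rewrite !det_mulmx det_inv det_intmx dg dc d2 invr1 !mul1r.
by rewrite row_mul (conj_row hv hgv hc) -rowE.
Qed.

Lemma Z1pmx_inv p n (gv : 'M[int]_(n.+2)) : \det gv = 1 -> Z1pmx p (invmx (intmx rat gv)).
Proof.
move=> dg; rewrite /invmx intmx_unit // det_intmx dg invr1 scale1r.
rewrite /intmx -(map_mx_adj (intr : {rmorphism int -> rat})).
exact: (Z1pmx_int p (\adj gv)).
Qed.

Lemma cancel3 (T : pzRingType) m m' (A : 'M[T]_(m', m)) (B C : 'M[T]_m) :
  B *m C = 1%:M -> A *m B *m C = A.
Proof. by move=> h; rewrite -mulmxA h mulmx1. Qed.

Theorem lemma3p4 (R : realType) (F : fieldType) (p : nat) (abs : F -> R)
    (iota : {rmorphism rat -> F}) (HQp : is_Qp p abs iota)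
    (p_prime : prime p) (p_odd : odd p)
    (n : nat) (v : 'cV[int]_(n.+2)) (hv : primitive v)
    (gv : 'M[int]_(n.+2)) (hgv : good_gv v gv)
    (kv : 'M[R]_(n.+2)) (hkv : good_kv v kv)
    (M : seq 'M[F]_(n.+2)) (hM : double_coset_reps p abs iota v M) :
  (forall x : Gel R F n,
     inO p iota v gv kv x <-> exists2 h, h \in M & inOh p abs iota v gv kv h x) /\
  (forall h h', h \in M -> h' \in M -> h <> h' ->
     forall x : Gel R F n, inOh p abs iota v gv kv h x -> inOh p abs iota v gv kv h' x -> False).
Proof.
case: HQp => [[a0 ge0 aM aD _] _].
case: hM => hM1 hM2 hM3.
have hgv' := hgv; case: hgv' => dg _ _ _.
have nv0 := normv_neq0 hv hkv.
case: hkv => skv hkv.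
have kvTkv : kv^T *m kv = 1%:M by case: skv.
have kvkvT : kv *m kv^T = 1%:M := SO_mulT skv.
have kvT_e : kv^T *m (normv R v *: e_last R n) = intmx R v.
  by rewrite -hkv mulmxA kvTkv mul1mx.
have GVR : intmx R gv *m invmx (intmx R gv) = 1%:M by rewrite mulmxV // intmx_unit.
have gamE : forall c1 c2, gam R iota c1 c2 =
  MkG (map_mx ratr c1) (map_mx iota c1) (map_mx ratr c2) (map_mx iota c2) by [].
have Z1M : forall m1 m2 m3 (A : 'M[rat]_(m1,m2)) (B : 'M[rat]_(m2,m3)),
    (forall i j, inZ1p p (A i j)) -> (forall i j, inZ1p p (B i j)) -> forall i j, inZ1p p ((A *m B) i j).
  move=> m1 m2 m3 A B hA hB i j; apply/(Z1pP _ p_prime); apply: Z1pmx_mul => i' j'; apply/(Z1pP _ p_prime).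
  exact: hA. exact: hB.
split.
- move=> x; split.
  + case=> l [c1 [c2 [[hr [hp [hhr hhp ->]]] hc ->]]].
    case: (hM2 hp hhp) => h hM [a [c [ha hc' ep]]].
    pose cr := map_mx (ratr : {rmorphism rat -> R}) c.
    have hcr : inHv v cr := inHv_map _ hc'.1.
    have crTcr : cr^T *m cr = 1%:M by case: hcr => [[]].
    pose k := kv *m hr *m cr^T *m kv^T.
    have hk : inK k.
      split.
        apply: SO_mul; last exact: SO_tr.
        apply: SO_mul; last by apply: SO_tr; case: hcr.
        by apply: SO_mul => //; case: hhr.
      apply: (@scalerI _ _ (normv R v)) => //.
      rewrite scalemxAr -hkv /k -!mulmxA (mulmxA kv^T) kvTkv mul1mx.
      by rewrite (inHv_tr hcr).2 hhr.2.
    exists h => //; exists k, a, (c *m c1), (conjg_v gv c *m c2).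
    case: hc => hc1 hc2 sc1 ac2.
    have hG : inGZ1p p (c *m c1) (conjg_v gv c *m c2).
      rewrite /inGZ1p; split.
      * by apply: Z1M; [exact: hc'.2 | exact: hc1].
      * apply: Z1M; last exact: hc2.
        move=> i j; apply/(Z1pP _ p_prime).
        apply: Z1pmx_mul; first apply: Z1pmx_mul.
        - exact: Z1pmx_inv.
        - by move=> i' j'; apply/(Z1pP _ p_prime); apply: hc'.2.
        - exact: Z1pmx_int.
      * by apply: SO_mul => //; case: hc'.1.
      * exact: ASL_conj hv hgv hc'.1 ac2.
    split => //.
    rewrite gamE /gmul /=; congr MkG.
    * rewrite map_mxM /k !mulmxA (cancel3 _ kvTkv).
      by rewrite (cancel3 _ crTcr).
    * by rewrite ep map_mxM mul1mx !mulmxA.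
    * rewrite map_mxM conj_map /conjg_v /k !mulmxA (K_comm v hk) /k !mulmxA.
      rewrite !(cancel3 _ GVR) (cancel3 _ kvTkv) (cancel3 _ crTcr).
      by [].
    * by rewrite ep map_mxM conj_map mul1mx !conjM // !mulmxA.
  + case=> h hM [k [h' [c1 [c2 [hk hh' hc ->]]]]].
    exists (MkG (kv^T *m k *m kv) (h' *m h) (conjg_v gv (kv^T *m k *m kv)) (conjg_v gv (h' *m h))), c1, c2.
    split => //.
      exists (kv^T *m k *m kv), (h' *m h); split => //.
        split.
          apply: SO_mul => //; apply: SO_mul; [exact: SO_tr | by case: hk].
        by rewrite -!mulmxA hkv -scalemxAr hk.2 kvT_e.
      exact: inHv_mul hh'.1 (hM1 h hM).
    rewrite gamE /gmul /=; congr MkG.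
    * by rewrite !mulmxA kvkvT mul1mx.
    * by rewrite mul1mx.
    * rewrite /conjg_v !mulmxA (cancel3 _ GVR) (cancel3 _ kvkvT) (K_comm v hk).
      by [].
    * by rewrite mul1mx conjM.
- move=> h h' hM hM' neq x [k1 [a1 [c1 [c2 [hk1 ha1 hc1 ->]]]]] [k2 [a2 [d1 [d2 [hk2 ha2 hd1 e]]]]].
  move: e; rewrite !gamE /gmul /= => -[e1 e2 _ _].
  apply: (hM3 h h' hM hM' neq h').
  + exists (a2^T *m a1), (c1 *m d1^T); split.
    * split; first exact: inHv_mul (inHv_tr ha2.1) ha1.1.
      apply: Zpmx_mul => //; last exact: ha1.2.
      by apply: Zpmx_tr; exact: ha2.2.
    * case: hc1 => hc1e _ sc1 _; case: hd1 => hd1e _ sd1 _.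
      split; last by apply: Z1M => // i j; rewrite mxE.
      split; first by apply: SO_mul => //; apply: SO_tr.
      apply: (map_mx_inj (f := (ratr : {rmorphism rat -> R}))).
      rewrite !map_mxM !map_intmx -map_trmx.
      have k1TK : k1^T *m k1 = 1%:M by case: hk1 => [[]].
      have ec : map_mx ratr c1 = kv^T *m k1^T *m k2 *m kv *m map_mx (ratr : {rmorphism rat -> R}) d1.
        rewrite -!mulmxA in e1; rewrite -!mulmxA -e1 !mulmxA (cancel3 _ k1TK).
        by rewrite kvTkv mul1mx.
      have dd : map_mx (ratr : {rmorphism rat -> R}) d1 *m (map_mx ratr d1)^T = 1%:M.
        by apply: SO_mulT; apply: SO_map.
      rewrite ec (cancel3 _ dd) -!mulmxA hkv -!scalemxAr hk2.2.
      have -> : k1^T *m e_last R n = e_last R n by rewrite -{1}hk1.2 mulmxA k1TK mul1mx.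
      by rewrite scalemxAr.
    * have dd : map_mx iota d1 *m (map_mx iota d1)^T = 1%:M.
        by apply: SO_mulT; apply: SO_map; case: hd1.
      have a2K : a2^T *m a2 = 1%:M by case: ha2 => [[[]]].
      rewrite map_mxM -map_trmx !mulmxA.
      have -> : a2^T *m a1 *m h *m map_mx iota c1 = a2^T *m (a1 *m h *m map_mx iota c1) by rewrite !mulmxA.
      by rewrite e2 !mulmxA a2K mul1mx (cancel3 _ dd).
  + exists 1%:M, 1%:M; split.
    * split; first exact: inHv1.
      exact: Zpmx1.
    * split; first exact: inHv1.
      by move=> i j; apply/(Z1pP _ p_prime); apply: Z1pmx1.
    * by rewrite map_mx1 mul1mx mulmx1.
Qed.
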